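(* Let $T=((\Omega,\mathcal{A}),\{(\Omega,\mathcal{M}_i)\}_{i\in N},\{t_i\}_{i\in N})$ be a type space. The players' beliefs in $T$ are universally consistent if and only if for every $I\subseteq N$ (not necessarily finite) and every $I$-common certainty component $S$ there exists $P\in\bigcap_{i\in I}\Pi_i$ with $\inf\{P(E):E\in\mathcal{A},S\subseteq E\}>0$.
   Context: A field on a set $X$ is a collection of subsets of $X$ containing $X$ and closed under complements and finite intersections. For a field $\mathcal{A}$ on $\Omega$, $\mathrm{pba}(\Omega,\mathcal{A})$ is the set of finitely additive nonnegative $P:\mathcal{A}\to\mathbb{R}$ with $P(\Omega)=1$; $B(\Omega,\mathcal{A})$ the sup-norm closure of the linear span of indicators of sets in $\mathcal{A}$; bounded finitely additive set functions carry the weak* topology (weakest making $\mu\mapsto\int f\,d\mu$ continuous for all $f\in B(\Omega,\mathcal{A})$), $\overline{\,\cdot\,}^\ast$ denotes weak* closure. A type space: $N$ a nonempty set of players, fields $\mathcal{M}_i\subseteq\mathcal{A}$ on a set $\Omega$, $t_i:\Omega\times\mathcal{A}\to[0,1]$ with $t_i(\omega,\cdot)\in\mathrm{pba}(\Omega,\mathcal{A})$, $t_i(\cdot,E)\in B(\Omega,\mathcal{M}_i)$ for $E\in\mathcal{A}$, and $t_i(\omega,E)=1$ whenever $E\in\mathcal{M}_i$, $\omega\in E$. $\Pi_i=\overline{\mathrm{conv}\{t_i(\omega,\cdot):\omega\in\Omega\}}^\ast$ (equivalently the $P\in\mathrm{pba}(\Omega,\mathcal{A})$ with $P(E\cap F)=\int_F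 t_i(\cdot,E)\,dP$ for all $E\in\mathcal{A},F\in\mathcal{M}_i$). For $I\subseteq N$, a nonempty $S\subseteq\Omega$ is an $I$-common certainty component if there is $E\in\mathcal{A}$ with $E\subseteq S$ and $t_i(\omega,E)=1$ for all $\omega\in S$, $i\in I$. The players' beliefs are universally consistent if for every finite $I\subseteq N$ and every $I$-common certainty component $S$ there exists $P\in\bigcap_{i\in I}\Pi_i$ with $\inf\{P(E):E\in\mathcal{A},S\subseteq E\}>0$. *)

(* Defs.v *)
From HB Require Import structures.
From Stdlib Require List.
From mathcomp Require Import all_boot all_order all_algebra.
From mathcomp Require Import boolp classical_sets cardinality reals.
Set Implicit Arguments. Unset Strict Implicit. Unset Printing Implicit Defensive.
Import Order.TTheory GRing.Theory Num.Theory.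
Local Open Scope classical_set_scope.
Local Open Scope ring_scope.

Section TypeSpaces.
Variable R : realType.

Definition is_field (X : Type) (F : set (set X)) : Prop :=
  [/\ F setT, (forall A, F A -> F (~` A)) & (forall A B, F A -> F B -> F (A `&` B))].

(* Finitely additive set functions on the field F (values outside F are irrelevant). *)
Definition fin_additive (X : Type) (F : set (set X)) (mu : set X -> R) : Prop :=
  forall A B, F A -> F B -> A `&` B = set0 -> mu (A `|` B) = mu A + mu B.

Definition ba (X : Type) (F : set (set X)) (mu : set X -> R) : Prop :=
  fin_additive F mu /\ exists c : R, forall A, F A -> `|mu A| <= c.

Definition pba (X : Type) (F : set (set X)) (P : set X -> R) : Prop :=
  [/\ fin_additive F P, (forall A, F A -> 0 <= P A) & P setT = 1].

Definition simple_over (X : Type) (F : set (set X)) (s : seq (R * set X)) : Prop :=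
  forall p, List.In p s -> F p.2.

Definition simple_eval (X : Type) (s : seq (R * set X)) (x : X) : R :=
  \sum_(p <- s) p.1 * (if `[< p.2 x >] then 1 else 0).

Definition simple_integral (X : Type) (mu : set X -> R) (s : seq (R * set X)) : R :=
  \sum_(p <- s) p.1 * mu p.2.

Definition inB (X : Type) (F : set (set X)) (f : X -> R) : Prop :=
  forall e : R, 0 < e -> exists s, simple_over F s /\
    forall x, `|f x - simple_eval s x| <= e.

Definition is_integral (X : Type) (F : set (set X)) (mu : set X -> R)
  (f : X -> R) (r : R) : Prop :=
  forall e : R, 0 < e -> exists2 d : R, 0 < d &
    forall s, simple_over F s -> (forall x, `|f x - simple_eval s x| <= d) ->
      `|simple_integral mu s - r| <= e.

Definition integral (X : Type) (F : set (set X)) (mu : set X -> R) (f : X -> R) : R :=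
  xget 0 [set r | is_integral F mu f r].

(* Weak* closure (in ba(X,F)) of a collection C of set functions: every basic
   weak* neighbourhood of P, given by finitely many f in B(X,F) and e > 0,
   meets C. *)
Definition weak_star_closure (X : Type) (F : set (set X))
  (C : set (set X -> R)) : set (set X -> R) :=
  [set P | ba F P /\
    forall (fs : seq (X -> R)) (e : R), (forall f, List.In f fs -> inB F f) -> 0 < e ->
      exists2 Q, C Q &
        forall f, List.In f fs -> `|integral F P f - integral F Q f| < e].

Definition conv_hull (X I : Type) (g : I -> set X -> R) : set (set X -> R) :=
  [set P | exists s : seq (R * I),
     [/\ (forall p, List.In p s -> 0 <= p.1), \sum_(p <- s) p.1 = 1 &
         P = (fun E => \sum_(p <- s) p.1 * g p.2 E)]].

Definition type_space (N Omega : Type) (A : set (set Omega))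
  (M : N -> set (set Omega)) (t : N -> Omega -> set Omega -> R) : Prop :=
  [/\ is_field A,
      (forall i, is_field (M i) /\ M i `<=` A),
      (forall i w, pba A (t i w)),
      (forall i E, A E -> inB (M i) (fun w => t i w E)) &
      (forall i E w, M i E -> E w -> t i w E = 1)].

Definition Pi (N Omega : Type) (A : set (set Omega))
  (t : N -> Omega -> set Omega -> R) (i : N) : set (set Omega -> R) :=
  weak_star_closure A (conv_hull (t i)).

Definition cc_component (N Omega : Type) (A : set (set Omega))
  (t : N -> Omega -> set Omega -> R) (I : set N) (S : set Omega) : Prop :=
  S !=set0 /\ exists E, [/\ A E, E `<=` S &
    forall w i, S w -> I i -> t i w E = 1].

Definition consistent_for (N Omega : Type) (A : set (set Omega))
  (t : N -> Omega -> set Omega -> R) (I : set N) (S : set Omega) : Prop :=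
  exists P, [/\ pba A P, (forall i, I i -> Pi A t i P) &
    0 < inf [set P E | E in [set E | A E /\ S `<=` E]]].

Definition universally_consistent (N Omega : Type) (A : set (set Omega))
  (t : N -> Omega -> set Omega -> R) : Prop :=
  forall I : set N, finite_set I ->
    forall S, cc_component A t I S -> consistent_for A t I S.

End TypeSpaces.

(* Main.v *)
Require Import Defs.
From mathcomp Require Import all_boot all_order all_algebra.
From mathcomp Require Import boolp classical_sets cardinality reals.
From mathcomp Require Import filter.
From mathcomp Require Import ring lra.
Set Implicit Arguments. Unset Strict Implicit. Unset Printing Implicit Defensive.
Import Order.TTheory GRing.Theory Num.Theory.
Local Open Scope classical_set_scope.
Local Open Scope ring_scope.

Section Simple.
Variable R : realType.
Variable X : Type.
Implicit Types (F : set (set X)) (mu : set X -> R) (s : seq (R * set X)).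

Definition ind (B : set X) (x : X) : R := if `[< B x >] then 1 else 0.

Lemma eval_nil x : simple_eval ([::] : seq (R * set X)) x = 0.
Proof. by rewrite /simple_eval big_nil. Qed.
Lemma eval_cons c B s x : simple_eval ((c,B)::s) x = c * ind B x + simple_eval s x.
Proof. by rewrite /simple_eval big_cons. Qed.
Lemma sint_nil mu : simple_integral mu ([::] : seq (R * set X)) = 0.
Proof. by rewrite /simple_integral big_nil. Qed.
Lemma sint_cons mu c B s : simple_integral mu ((c,B)::s) = c * mu B + simple_integral mu s.
Proof. by rewrite /simple_integral big_cons. Qed.
Lemma eval_cat s1 s2 x : simple_eval (s1 ++ s2) x = simple_eval s1 x + simple_eval s2 x.
Proof. by rewrite /simple_eval big_cat. Qed.
Lemma sint_cat mu s1 s2 : simple_integral mu (s1 ++ s2) = simple_integral mu s1 + simple_integral mu s2.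
Proof. by rewrite /simple_integral big_cat. Qed.
Definition negs s := map (fun p => (- p.1, p.2)) s.
Lemma eval_negs s x : simple_eval (negs s) x = - simple_eval s x.
Proof. by rewrite /simple_eval big_map -sumrN; apply: eq_bigr => p _; rewrite mulNr. Qed.
Lemma sint_negs mu s : simple_integral mu (negs s) = - simple_integral mu s.
Proof. by rewrite /simple_integral big_map -sumrN; apply: eq_bigr => p _; rewrite mulNr. Qed.
Lemma so_cons F p s : simple_over F (p :: s) <-> F p.2 /\ simple_over F s.
Proof.
split => [h|[h1 h2] q /= [<-|]]; last by apply: h2.
 - by split; [apply: h; left | move=> q hq; apply: h; right].
 - done.
Qed.
Lemma so_cat F s1 s2 : simple_over F s1 -> simple_over F s2 -> simple_over F (s1 ++ s2).
Proof. by move=> h1 h2 p hp; case: (List.in_app_or _ _ _ hp) => ?; [apply: h1|apply: h2]. Qed.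
Lemma so_negs F s : simple_over F s -> simple_over F (negs s).
Proof.
elim: s => [|[c B] s IH] h p //= [<-|hp]; first by apply: (h (c,B)); left.
by apply: IH hp => q hq; apply: h; right.
Qed.

Lemma field0 F : is_field F -> F set0.
Proof. by case=> hT hC _; rewrite -setCT; apply: hC. Qed.
Lemma fieldU F A B : is_field F -> F A -> F B -> F (A `|` B).
Proof.
case=> hT hC hI FA FB; rewrite -[A `|` B]setCK setCU; apply: (hC); apply: (hI); exact: (hC).
Qed.
Lemma fieldC F A : is_field F -> F A -> F (~` A).
Proof. by case=> _ hC _; apply: hC. Qed.
Lemma fieldI F A B : is_field F -> F A -> F B -> F (A `&` B).
Proof. by case=> _ _ hI; apply: hI. Qed.
Lemma fieldT F : is_field F -> F setT.
Proof. by case. Qed.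

Lemma pba0 F mu : is_field F -> pba F mu -> mu set0 = 0.
Proof.
move=> hF [ha _ _]; have := ha set0 set0 (field0 hF) (field0 hF) (setI0 _).
rewrite setU0 => /eqP; rewrite -subr_eq0 opprD addrA subrr sub0r oppr_eq0 => /eqP //.
Qed.

Lemma pba_split F mu A C : is_field F -> pba F mu -> F A -> F C ->
  mu A = mu (A `&` C) + mu (A `&` ~` C).
Proof.
move=> hF [ha _ _] FA FC; rewrite -ha; first by rewrite -setIUr setUv setIT.
- exact: fieldI.
- by apply: fieldI => //; apply: fieldC.
- by rewrite setIACA setICr setI0.
Qed.

Lemma pba_ge0 F mu A : pba F mu -> F A -> 0 <= mu A.
Proof. by case=> _ h _; apply: h. Qed.

Lemma pba_mono F mu A B : is_field F -> pba F mu -> F A -> F B -> A `<=` B -> mu A <= mu B.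
Proof.
move=> hF hm FA FB AB; rewrite (pba_split hF hm FB FA) (setIidr AB) lerDl.
by apply: (pba_ge0 hm); apply: fieldI => //; apply: fieldC.
Qed.

Lemma pba_le1 F mu A : is_field F -> pba F mu -> F A -> mu A <= 1.
Proof.
move=> hF hm FA; have [_ _ <-] := hm; apply: (pba_mono hF hm) => //; exact: fieldT.
Qed.

End Simple.

Section Integ.
Variable R : realType.
Variable X : Type.
Variable F : set (set X).
Hypothesis hF : is_field F.
Variable mu : set X -> R.
Hypothesis hmu : pba F mu.
Implicit Types (s : seq (R * set X)).

Lemma sum_split s C D : simple_over F s -> F C -> F D ->
  \sum_(p <- s) p.1 * mu (p.2 `&` C) =
  \sum_(p <- s) p.1 * mu (p.2 `&` (C `&` D)) + \sum_(p <- s) p.1 * mu (p.2 `&` (C `&` ~` D)).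
Proof.
move=> + FC FD; elim: s => [|[c B] s IH] hs0; first by rewrite !big_nil addr0.
case/so_cons: hs0 => /= FB hs.
rewrite !big_cons IH //= (pba_split hF hmu (_ : F (B `&` C)) FD); last exact: fieldI.
by rewrite !setIA; ring.
Qed.

Lemma sbound s : simple_over F s -> forall C m, F C -> (forall x, C x -> m <= simple_eval s x) ->
  m * mu C <= \sum_(p <- s) p.1 * mu (p.2 `&` C).
Proof.
elim: s => [|[c B] s IH] hs0 C m FC hm.
  rewrite big_nil; have [[x Cx]|nC] := pselect (C !=set0).
    have := hm x Cx; rewrite eval_nil => m0.
    by rewrite mulr_le0_ge0 // (pba_ge0 hmu FC).
  have -> : C = set0 by apply/seteqP; split => x // Cx; apply: nC; exists x.
  by rewrite (pba0 hF hmu) mulr0.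
case/so_cons: hs0 => /= FB hs.
rewrite big_cons (sum_split hs FC FB) /=.
have FCB : F (C `&` B) by exact: fieldI.
have FCnB : F (C `&` ~` B) by apply: fieldI => //; exact: fieldC.
have h1 := IH hs _ (m - c) FCB.
have h2 := IH hs _ m FCnB.
have e1 : forall x, (C `&` B) x -> m - c <= simple_eval s x.
  move=> x [Cx Bx]; have := hm x Cx; rewrite eval_cons /ind.
  by rewrite (asboolT Bx) mulr1 => ?; lra.
have e2 : forall x, (C `&` ~` B) x -> m <= simple_eval s x.
  move=> x [Cx Bx]; have := hm x Cx; rewrite eval_cons /ind.
  by rewrite (asboolF Bx) mulr0 add0r.
have {}h1 := h1 e1; have {}h2 := h2 e2.
rewrite (pba_split hF hmu FC FB) (setIC B C).
set a := mu (C `&` B) in h1 *; set b := mu (C `&` ~` B) in h2 *.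
have -> : m * (a + b) = c * a + (m - c) * a + m * b by ring.
by rewrite -addrA lerD2l lerD.
Qed.

Lemma sint_le s s' (d : R) : simple_over F s -> simple_over F s' ->
  (forall x, simple_eval s x <= simple_eval s' x + d) ->
  simple_integral mu s <= simple_integral mu s' + d.
Proof.
move=> hs hs' hd.
have := @sbound (s' ++ negs s) (so_cat hs' (so_negs hs)) setT (- d) (fieldT hF).
have [_ _ m1] := hmu.
rewrite m1 mulr1.
have -> : \sum_(p <- s' ++ negs s) p.1 * mu (p.2 `&` setT) = simple_integral mu (s' ++ negs s).
  by apply: eq_bigr => p _; rewrite setIT.
rewrite sint_cat sint_negs => H.
have : - d <= simple_integral mu s' - simple_integral mu s.
  apply: H => x _; rewrite eval_cat eval_negs; have := hd x; lra.
lra.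
Qed.

Definition lowset (f : X -> R) : set R :=
  [set simple_integral mu s | s in [set s | simple_over F s /\ forall x, simple_eval s x <= f x]].

Lemma low_approx (f : X -> R) s0 (d : R) : simple_over F s0 ->
  (forall x, `|f x - simple_eval s0 x| <= d) ->
  `|sup (lowset f) - simple_integral mu s0| <= d.
Proof.
move=> hs0 hd.
have hd' x : simple_eval s0 x - d <= f x <= simple_eval s0 x + d.
  by have := hd x; rewrite ler_norml => /andP [? ?]; apply/andP; split; lra.
set s1 := s0 ++ [:: (- d, setT)].
have hs1 : simple_over F s1.
  by apply: so_cat => //; apply/so_cons; split; [exact: fieldT | by []].
have ev1 x : simple_eval s1 x = simple_eval s0 x - d.
  by rewrite eval_cat eval_cons eval_nil /ind asboolT // mulr1 addr0.
have [_ _ m1] := hmu.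
have in1 : lowset f (simple_integral mu s0 - d).
  exists s1; first by split => // x; rewrite ev1; have := hd' x => /andP[].
  by rewrite sint_cat sint_cons sint_nil m1 mulr1 addr0.
have ub : ubound (lowset f) (simple_integral mu s0 + d).
  move=> _ [s [hs hsf] <-]; apply: sint_le => // x.
  by have := hsf x; have := hd' x => /andP[]; lra.
have lo := ub_le_sup (ex_intro _ _ ub) in1.
have hi := ge_sup (ex_intro _ _ in1) ub.
by rewrite ler_norml; apply/andP; split; lra.
Qed.

Lemma integralE (f : X -> R) : inB F f -> integral F mu f = sup (lowset f).
Proof.
move=> hB.
have isI : is_integral F mu f (sup (lowset f)).
  move=> e e0; exists e => // s hs hd; rewrite distrC; exact: low_approx.
have : is_integral F mu f (integral F mu f) by apply: xgetI isI.
move=> isI2.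
apply/eqP; rewrite -subr_eq0 -normr_le0; apply/ler_addgt0Pr => e e0; rewrite add0r.
have e20 : 0 < e / 2 by rewrite divr_gt0.
have [d1 d10 H1] := isI2 _ e20.
have [d2 d20 H2] := isI _ e20.
have md : 0 < Num.min d1 d2 by rewrite lt_min d10 d20.
have [s [hs hsd]] := hB _ md.
have mn1 : Num.min d1 d2 <= d1 by rewrite ge_min lexx.
have mn2 : Num.min d1 d2 <= d2 by rewrite ge_min lexx orbT.
have := H1 s hs (fun x => le_trans (hsd x) mn1).
have := H2 s hs (fun x => le_trans (hsd x) mn2).
move=> a b; rewrite (splitr e).
have := ler_distD (simple_integral mu s) (integral F mu f) (sup (lowset f)).
rewrite (distrC (integral F mu f)) => h; apply: le_trans h _.
by apply: lerD => //; rewrite distrC.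
Qed.

Lemma int_approx (f : X -> R) s0 (d : R) : inB F f -> simple_over F s0 ->
  (forall x, `|f x - simple_eval s0 x| <= d) ->
  `|integral F mu f - simple_integral mu s0| <= d.
Proof. by move=> hB hs hd; rewrite integralE //; exact: low_approx. Qed.

End Integ.

Lemma eq_eps (R : realType) (a b K : R) : 0 <= K ->
  (forall d : R, 0 < d -> `|a - b| <= d * K) -> a = b.
Proof.
move=> K0 H; apply/eqP; rewrite -subr_eq0 -normr_le0; apply/ler_addgt0Pr => e e0.
rewrite add0r; have K1 : 0 < K + 1 by lra.
apply: le_trans (H (e / (K + 1)) _) _; first by rewrite divr_gt0.
rewrite mulrAC ler_pdivrMr //; nra.
Qed.

Section Integ2.
Variable R : realType.
Variable X : Type.
Variable F : set (set X).
Hypothesis hF : is_field F.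
Implicit Types (s : seq (R * set X)) (mu : set X -> R) (E : set X) (h : X -> R).

Lemma ind_eval (E : set X) x : ind R E x = simple_eval [:: ((1:R), E)] x.
Proof. by rewrite eval_cons eval_nil mul1r addr0. Qed.

Lemma inB_ind E : F E -> inB F (ind R E).
Proof.
move=> FE e e0; exists [:: (1, E)]; split.
  by apply/so_cons; split.
by move=> x; rewrite -ind_eval subrr normr0 ltW.
Qed.

Lemma integral_ind mu E : pba F mu -> F E -> integral F mu (ind R E) = mu E.
Proof.
move=> hmu FE; have := int_approx hF hmu (d := 0) (inB_ind FE) (s0 := [:: (1, E)]).
rewrite sint_cons sint_nil mul1r addr0 => H.
apply/eqP; rewrite -subr_eq0 -normr_le0; apply: H.
  by apply/so_cons; split.
by move=> x; rewrite -ind_eval subrr normr0.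
Qed.

Definition restr s (E : set X) := map (fun p => (p.1, p.2 `&` E)) s.

Lemma ind_I (B E : set X) x : ind R (B `&` E) x = ind R B x * ind R E x.
Proof.
rewrite /ind; case: (pselect (B x)) => Bx; case: (pselect (E x)) => Ex.
- by rewrite (asboolT Bx) (asboolT Ex) (@asboolT ((B `&` E) x)) ?mulr1.
- by rewrite (asboolT Bx) (asboolF Ex) (@asboolF ((B `&` E) x)) ?mulr0 // => -[].
- by rewrite (asboolF Bx) (@asboolF ((B `&` E) x)) ?mul0r // => -[].
- by rewrite (asboolF Bx) (@asboolF ((B `&` E) x)) ?mul0r // => -[].
Qed.

Lemma eval_restr s E x : simple_eval (restr s E) x = simple_eval s x * ind R E x.
Proof.
rewrite /simple_eval big_map mulr_suml; apply: eq_bigr => p _.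
by have := ind_I p.2 E x; rewrite /ind /= => ->; rewrite mulrA.
Qed.

Lemma so_restr s E : F E -> simple_over F s -> simple_over F (restr s E).
Proof.
move=> FE; elim: s => [|[c B] s IH] //= hs p [<-|hp].
  by apply: fieldI => //; apply: (hs (c,B)); left.
by apply: IH hp => q hq; apply: hs; right.
Qed.

Lemma ind_le1 E x : `|ind R E x| <= 1.
Proof. by rewrite /ind; case: asboolP; rewrite ?normr1 ?normr0. Qed.

Lemma ind_ge0 E x : 0 <= ind R E x.
Proof. by rewrite /ind; case: asboolP. Qed.

Lemma inB_restr h E : F E -> inB F h -> inB F (fun x => h x * ind R E x).
Proof.
move=> FE hB e e0; have [s [hs hd]] := hB e e0; exists (restr s E); split.
  exact: so_restr.
move=> x; rewrite eval_restr -mulrBl normrM.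
apply: le_trans (ler_wpM2l (normr_ge0 _) (ind_le1 E x)) _; rewrite mulr1; exact: hd.
Qed.

Definition condm mu (E : set X) : set X -> R := fun Y => mu (Y `&` E) / mu E.

Lemma condm_pba mu E : pba F mu -> F E -> 0 < mu E -> pba F (condm mu E).
Proof.
move=> hmu FE mE; have [ha hp h1] := hmu; split.
- move=> A B FA FB AB; rewrite /condm -mulrDl -ha; first by rewrite setIUl.
  + exact: fieldI.
  + exact: fieldI.
  + by rewrite setIACA AB set0I.
- by move=> A FA; apply: divr_ge0; [apply: hp; exact: fieldI | exact: ltW].
- by rewrite /condm setTI divff // gt_eqF.
Qed.

Lemma sint_restr mu s E : simple_integral (condm mu E) s = simple_integral mu (restr s E) / mu E.
Proof.
rewrite /simple_integral big_map mulr_suml; apply: eq_bigr => p _.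
by rewrite /condm mulrA.
Qed.

Lemma int_condm mu E h : pba F mu -> F E -> 0 < mu E -> inB F h ->
  integral F (condm mu E) h = integral F mu (fun x => h x * ind R E x) / mu E.
Proof.
move=> hmu FE mE hB; apply: (@eq_eps _ _ _ (1 + (mu E)^-1)).
  by rewrite addr_ge0 // invr_ge0 ltW.
move=> d d0; have [s [hs hd]] := hB d d0.
have h1 := int_approx hF (condm_pba hmu FE mE) hB hs hd.
have h2 := int_approx hF hmu (inB_restr FE hB) (so_restr FE hs)
   (s0 := restr s E) (d := d) (fun x => _).
have h2' : `|integral F mu (fun x => h x * ind R E x) - simple_integral mu (restr s E)| <= d.
  apply: h2 => x; rewrite eval_restr -mulrBl normrM.
  apply: le_trans (ler_wpM2l (normr_ge0 _) (ind_le1 E x)) _; rewrite mulr1; exact: hd.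
rewrite sint_restr in h1.
have : `|integral F mu (fun x => h x * ind R E x) / mu E - simple_integral mu (restr s E) / mu E| <= d / mu E.
  rewrite -mulrBl normrM normfV (gtr0_norm mE); apply: ler_wpM2r => //; rewrite invr_ge0 ltW //.
move=> h3; have := ler_distD (simple_integral mu (restr s E) / mu E) (integral F (condm mu E) h)
   (integral F mu (fun x => h x * ind R E x) / mu E).
rewrite (distrC (simple_integral mu (restr s E) / mu E)) => h4.
apply: le_trans h4 _; rewrite mulrDr mulr1; exact: lerD.
Qed.

Lemma sint_congr mu1 mu2 s : (forall A, F A -> mu1 A = mu2 A) -> simple_over F s ->
  simple_integral mu1 s = simple_integral mu2 s.
Proof.
move=> H; elim: s => [|[c B] s IH] hs; first by rewrite !sint_nil.
case/so_cons: hs => /= FB hs; by rewrite !sint_cons H // IH.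
Qed.

Lemma int_congr mu1 mu2 h : pba F mu1 -> pba F mu2 -> (forall A, F A -> mu1 A = mu2 A) ->
  inB F h -> integral F mu1 h = integral F mu2 h.
Proof.
move=> h1 h2 H hB; apply: (@eq_eps _ _ _ 2) => // d d0.
have [s [hs hd]] := hB d d0.
have a1 := int_approx hF h1 hB hs hd.
have a2 := int_approx hF h2 hB hs hd.
rewrite (sint_congr H hs) in a1.
have := ler_distD (simple_integral mu2 s) (integral F mu1 h) (integral F mu2 h).
rewrite (distrC (simple_integral mu2 s)) => h4; apply: le_trans h4 _.
rewrite mulrDr mulr1; exact: lerD.
Qed.

End Integ2.

Section Lvl.
Variable R : realType.
Variable X : Type.
Variable F : set (set X).
Hypothesis hF : is_field F.
Implicit Types (s : seq (R * set X)).

Lemma lvl s : simple_over F s -> forall a : R, F [set x | a < simple_eval s x].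
Proof.
elim: s => [|[c B] s IH] hs a.
  case: (lerP 0 a) => a0.
    have -> : [set x | a < simple_eval ([::] : seq (R * set X)) x] = set0.
      by apply/seteqP; split => x //=; rewrite eval_nil ltNge a0.
    exact: field0.
  have -> : [set x | a < simple_eval ([::] : seq (R * set X)) x] = setT.
    by apply/seteqP; split => x //= _; rewrite eval_nil.
  exact: fieldT.
case/so_cons: hs => /= FB hs.
have -> : [set x | a < simple_eval ((c, B) :: s) x] =
  (B `&` [set x | a - c < simple_eval s x]) `|` (~` B `&` [set x | a < simple_eval s x]).
  apply/seteqP; split => x /=; rewrite eval_cons /ind.
  - case: (pselect (B x)) => Bx.
      by rewrite (asboolT Bx) mulr1 => h; left; split => //; lra.
    by rewrite (asboolF Bx) mulr0 add0r => h; right.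
  - case=> -[Bx h].
      by rewrite (asboolT Bx) mulr1; lra.
    by rewrite (asboolF Bx) mulr0 add0r.
apply: fieldU => //; apply: fieldI => //; [exact: IH | exact: fieldC | exact: IH].
Qed.

Definition atom s (w : X) : set X :=
  foldr (fun p acc => (if `[< p.2 w >] then p.2 else ~` p.2) `&` acc) setT s.

Lemma atom_in s w : simple_over F s -> F (atom s w).
Proof.
elim: s => [|[c B] s IH] hs /=; first exact: fieldT.
case/so_cons: hs => /= FB hs; apply: fieldI => //; last exact: IH.
by case: asboolP => _ //; apply: fieldC.
Qed.

Lemma atom_self s w : atom s w w.
Proof.
elim: s => [|[c B] s IH] //=; split => //.
by case: asboolP.
Qed.

Lemma atom_eval s w v : atom s w v -> simple_eval s v = simple_eval s w.
Proof.
elim: s => [|[c B] s IH] /=; first by rewrite !eval_nil.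
move=> [hv /IH hs]; rewrite !eval_cons hs /ind; congr (c * _ + _).
move: hv; case: (pselect (B w)) => Bw.
  by rewrite (asboolT Bw) => Bv; rewrite (asboolT Bv).
by rewrite (asboolF Bw) => Bv; rewrite (asboolF Bv).
Qed.

End Lvl.

Lemma sum_ge0_in (R : realType) (T : Type) (s : seq T) (G : T -> R) :
  (forall p, List.In p s -> 0 <= G p) -> 0 <= \sum_(p <- s) G p.
Proof.
elim: s => [|p s IH] H; first by rewrite big_nil.
rewrite big_cons addr_ge0 //; first by apply: H; left.
by apply: IH => q hq; apply: H; right.
Qed.

Section TS.
Variable R : realType.
Variables (N Omega : Type) (A : set (set Omega)) (M : N -> set (set Omega))
  (t : N -> Omega -> set Omega -> R).
Hypothesis hts : type_space A M t.

Lemma hA : is_field A. Proof. by case: hts. Qed.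
Lemma hM i : is_field (M i). Proof. by case: hts => _ h _ _ _; case: (h i). Qed.
Lemma MA i : M i `<=` A. Proof. by case: hts => _ h _ _ _; case: (h i). Qed.
Lemma tp i w : pba A (t i w). Proof. by case: hts. Qed.
Lemma tB i E : A E -> inB (M i) (fun w => t i w E). Proof. by case: hts => _ _ _ h _; apply: h. Qed.
Lemma tI i E w : M i E -> E w -> t i w E = 1. Proof. by case: hts => _ _ _ _ h; apply: h. Qed.

Lemma t_compl i w B : A B -> t i w (~` B) = 1 - t i w B.
Proof.
move=> AB; have [ha _ h1] := tp i w.
have := ha B (~` B) AB (fieldC hA AB) (setICr B); rewrite setUv h1 => ->; ring.
Qed.

Lemma tM i w B : M i B -> t i w B = ind R B w.
Proof.
move=> MB; rewrite /ind; case: (pselect (B w)) => Bw.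
  by rewrite (asboolT Bw) tI.
rewrite (asboolF Bw); have := t_compl i w (MA MB).
by rewrite tI //; [move=> h; lra | exact: fieldC (hM i) MB].
Qed.

Variables (i : N) (S E : set Omega).
Hypothesis AE : A E.
Hypothesis ES : E `<=` S.
Hypothesis tS : forall w, S w -> t i w E = 1.

Lemma zero_one w : t i w E = 0 \/ t i w E = 1.
Proof.
set a := t i w E.
have [a0|a0] := eqVneq a 0; first by left.
right; have ha0 : 0 <= a by apply: (pba_ge0 (tp i w)).
have ha1 : a <= 1 by apply: (pba_le1 hA (tp i w)).
apply/eqP; rewrite eq_le ha1 /=; apply/ler_addgt0Pr => d d0.
have d20 : 0 < d / 2 by rewrite divr_gt0.
have [g [hg hgd]] := @tB i E AE _ d20.
set G := atom g w.
have MG : M i G := atom_in (hM i) w hg.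
have AG : A G := MA MG.
have tG : t i w G = 1 by apply: tI => //; exact: atom_self.
have tnG : t i w (~` G) = 0 by rewrite t_compl // tG subrr.
have e1 := pba_split hA (tp i w) AE AG.
have e2 : t i w (E `&` ~` G) = 0.
  have AEG : A (E `&` ~` G) := fieldI hA AE (fieldC hA AG).
  have h1 := pba_ge0 (tp i w) AEG.
  have h2 : t i w (E `&` ~` G) <= t i w (~` G).
    by apply: (pba_mono hA (tp i w) AEG (fieldC hA AG)) => x [].
  lra.
have [[v [Ev Gv]]|nEG] := pselect ((E `&` G) !=set0).
  have fv := tS (ES Ev).
  have := hgd v; have := hgd w; rewrite (atom_eval Gv) fv -/a.
  rewrite !ler_norml => /andP [h1 h2] /andP [h3 h4]; lra.
exfalso; move: a0; rewrite /a e1 e2 addr0.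
have -> : E `&` G = set0 by apply/seteqP; split => x // hx; apply: nEG; exists x.
by rewrite (pba0 hA (tp i w)) eqxx.
Qed.

Definition Zs : set Omega := [set w | t i w E = 1].

Lemma Z_in : M i Zs.
Proof.
have q0 : (0 : R) < 1/4 by lra.
have [g [hg hgd]] := @tB i E AE _ q0.
have -> : Zs = [set x | 1/2 < simple_eval g x].
  apply/seteqP; split => x /=.
    move=> h; have := hgd x; rewrite /Zs /= in h; rewrite h ler_norml => /andP [? ?]; lra.
  have := hgd x; rewrite ler_norml => /andP [h1 h2] hx.
  by have [h|//] := zero_one x; rewrite h in h1 h2; lra.
exact: (lvl (hM i) hg).
Qed.

End TS.

Lemma ratio_est (R : realType) (p q a b K e eta : R) : 0 < p -> p <= 1 -> 1 <= K ->
  `|a| <= K -> 0 < e -> `|p - q| < eta -> `|a - b| < eta -> eta <= p / 2 ->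
  eta <= e * (p * p) / (8 * K) -> `|a / p - b / q| < e.
Proof.
move=> p0 p1 K1 aK e0 pq ab ep ee.
have hq : p / 2 < q by move: pq; rewrite ltr_norml => /andP [? ?]; lra.
have q0 : 0 < q by lra.
have -> : a / p - b / q = (a * (q - p) + (a - b) * p) / (p * q).
  by field; apply/andP; split; rewrite gt_eqF.
have pq0 : 0 < p * q by rewrite mulr_gt0.
rewrite normrM normfV (gtr0_norm pq0) ltr_pdivrMr //.
have n1 : `|a * (q - p)| <= K * eta.
  rewrite normrM distrC; apply: ler_pM => //; exact: ltW.
have n2 : `|(a - b) * p| <= eta * p.
  rewrite normrM (gtr0_norm p0); apply: ler_wpM2r; [exact: ltW | exact: ltW].
have n3 := ler_normD (a * (q - p)) ((a - b) * p).
have K0 : 0 < K by lra.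
have ee' : 8 * K * eta <= e * (p * p).
  by rewrite mulrC -ler_pdivlMr ?mulr_gt0 // ?ltr0n // mulrC.
have eta0 : 0 <= eta by apply: le_trans (normr_ge0 _) (ltW ab).
have h4 : eta * p <= K * eta by nra.
have h5 : e * (p * p) < 2 * (e * (p * q)).
  have h6 : 0 < p * (2 * q - p) by rewrite mulr_gt0 //; lra.
  have h7 : 0 < e * (p * (2 * q - p)) by rewrite mulr_gt0.
  move: h7; rewrite !mulrBr; lra.
nra.
Qed.

Lemma in_map_ex (T U : Type) (f : T -> U) (s : seq T) (q : U) :
  List.In q (map f s) -> exists p, List.In p s /\ q = f p.
Proof.
elim: s => [|p s IH] //= [<-|h]; first by exists p; split => //; left.
by have [p' [h1 h2]] := IH h; exists p'; split => //; right.
Qed.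

Lemma norm_in_sum (R : realType) (T : Type) (s : seq T) (G : T -> R) q :
  List.In q s -> `|G q| <= \sum_(p <- s) `|G p|.
Proof.
elim: s => [|p s IH] //= [<-|h]; rewrite big_cons.
  by rewrite lerDl sumr_ge0.
by apply: le_trans (IH h) _; rewrite lerDr.
Qed.

Section Hull.
Variable R : realType.
Variables (N Omega : Type) (A : set (set Omega)) (M : N -> set (set Omega))
  (t : N -> Omega -> set Omega -> R).
Hypothesis hts : type_space A M t.
Variables (i : N) (S E : set Omega).
Hypothesis AE : A E.
Hypothesis ES : E `<=` S.
Hypothesis tS : forall w, S w -> t i w E = 1.

Let hA := hA hts.
Let tp := tp hts.

Lemma hull_pba Q : conv_hull (t i) Q -> pba A Q.
Proof.
move=> [s [hnn hs1 ->]]; split.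
- move=> B C AB AC BC; rewrite -big_split; apply: eq_bigr => p _.
  by have [ha _ _] := tp i p.2; rewrite ha // mulrDr.
- move=> B AB; apply: sum_ge0_in => p hp; apply: mulr_ge0; first exact: hnn.
  exact: (pba_ge0 (tp i p.2)).
- rewrite -hs1; apply: eq_bigr => p _; by have [_ _ ->] := tp i p.2; rewrite mulr1.
Qed.

Lemma hull_EZ Q : conv_hull (t i) Q -> Q E = Q (Zs t i E).
Proof.
move=> [s [hnn hs1 ->]]; apply: eq_bigr => p _; congr (_ * _).
rewrite (tM hts _ (Z_in hts AE ES tS)) /ind.
have [h|h] := zero_one hts AE ES tS p.2; rewrite h.
  rewrite asboolF // /Zs /= h => /esym/eqP; by rewrite oner_eq0.
by rewrite asboolT.
Qed.

Lemma tEY w Y : A Y -> t i w E * t i w Y = t i w (Y `&` E).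
Proof.
move=> AY; have AYE : A (Y `&` E) := fieldI hA AY AE.
have [h|h] := zero_one hts AE ES tS w; rewrite h.
  have h1 := pba_ge0 (tp i w) AYE.
  have h2 : t i w (Y `&` E) <= t i w E.
    by apply: (pba_mono hA (tp i w) AYE AE) => x [].
  rewrite mul0r; lra.
rewrite mul1r (pba_split hA (tp i w) AY AE).
have AYnE : A (Y `&` ~` E) := fieldI hA AY (fieldC hA AE).
have h1 := pba_ge0 (tp i w) AYnE.
have h2 : t i w (Y `&` ~` E) <= t i w (~` E).
  by apply: (pba_mono hA (tp i w) AYnE (fieldC hA AE)) => x [].
rewrite (t_compl hts) // h in h2; lra.
Qed.

Lemma hull_cond Q : conv_hull (t i) Q -> 0 < Q E ->
  exists Q', conv_hull (t i) Q' /\ forall Y, A Y -> Q' Y = condm Q E Y.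
Proof.
move=> hQ q0; have hQ' := hQ; move: hQ' => [s [hnn hs1 defQ]].
set q := Q E.
exists (fun Y => \sum_(p <- map (fun p => (p.1 * t i p.2 E / q, p.2)) s) p.1 * t i p.2 Y); split.
  exists (map (fun p => (p.1 * t i p.2 E / q, p.2)) s); split => //.
  - move=> p hp; have [p0 [hp0 ->]] := in_map_ex hp; rewrite /=; apply: divr_ge0; last exact: ltW.
    apply: mulr_ge0; first exact: hnn.
    exact: (pba_ge0 (tp i p0.2)).
  - rewrite big_map /= -mulr_suml.
    have -> : \sum_(i0 <- s) i0.1 * t i i0.2 E = q by rewrite /q defQ.
    by rewrite divff // gt_eqF.
move=> Y AY; rewrite big_map /condm -/q defQ mulr_suml; apply: eq_bigr => p _ /=.
rewrite -tEY //; ring.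
Qed.

Lemma Pi_EZ P : pba A P -> Pi A t i P -> P E = P (Zs t i E).
Proof.
move=> hP [_ H]; have AZ : A (Zs t i E) := MA hts (Z_in hts AE ES tS).
apply: (@eq_eps _ _ _ 2) => // d d0.
have [|Q hQ hd] := H [:: ind R E; ind R (Zs t i E)] d _ d0.
  by move=> f /= [<-|[<-|//]]; apply: inB_ind.
have hQp := hull_pba hQ.
have h1 := hd _ (or_introl erefl).
have h2 := hd _ (or_intror (or_introl erefl)).
rewrite (integral_ind hA hP AE) (integral_ind hA hQp AE) in h1; rewrite (integral_ind hA hP AZ) (integral_ind hA hQp AZ) in h2.
rewrite (hull_EZ hQ) in h1.
have := ler_distD (Q (Zs t i E)) (P E) (P (Zs t i E)).
rewrite (distrC (Q _)) => h; apply: le_trans h _; rewrite mulrDr mulr1.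
by apply: lerD; apply: ltW.
Qed.

Lemma Pi_cond P : pba A P -> Pi A t i P -> 0 < P E -> Pi A t i (condm P E).
Proof.
move=> hP [_ H] p0; set p := P E in p0 *.
have hPc := condm_pba hA hP AE p0.
split.
  have [ha hp h1] := hPc; split => //; exists 1 => B AB.
  rewrite ger0_norm; [exact: pba_le1 hA hPc AB | exact: hp].
move=> fs e hfs e0.
set K := 1 + \sum_(h <- fs) `|integral A P (fun x => h x * ind R E x)|.
have K1 : 1 <= K by rewrite lerDl sumr_ge0.
have K0 : 0 < K by lra.
have p1 : p <= 1 by exact: pba_le1 hA hP AE.
set eta := Num.min (p / 2) (e * (p * p) / (8 * K)).
have eta0 : 0 < eta.
  by rewrite lt_min !divr_gt0 ?mulr_gt0 ?ltr0n.
have ep1 : eta <= p / 2 by rewrite ge_min lexx.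
have ep2 : eta <= e * (p * p) / (8 * K) by rewrite ge_min lexx orbT.
have [|Q hQ hd] := H (ind R E :: map (fun h => fun x => h x * ind R E x) fs) eta _ eta0.
  move=> f /= [<-|]; first exact: inB_ind.
  by move=> hf; have [h [hh ->]] := in_map_ex hf; apply: inB_restr => //; apply: hfs.
have hQp := hull_pba hQ.
have hE := hd _ (or_introl erefl); rewrite (integral_ind hA hP AE) (integral_ind hA hQp AE) in hE.
have q0 : 0 < Q E.
  move: hE; rewrite -/p ltr_norml => /andP [hE1 hE2]; lra.
have [Q' [hQ' eQ']] := hull_cond hQ q0.
exists Q' => // h hh.
have hB := hfs h hh.
have hQ'p := hull_pba hQ'.
rewrite (int_congr hA hQ'p (condm_pba hA hQp AE q0) eQ' hB).
rewrite !int_condm //.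
have haK : `|integral A P (fun x => h x * ind R E x)| <= K.
  apply: le_trans (norm_in_sum (fun h => integral A P (fun x => h x * ind R E x)) hh) _.
  by rewrite /K lerDr.
have hab : `|integral A P (fun x => h x * ind R E x) - integral A Q (fun x => h x * ind R E x)| < eta.
  apply: hd; right; clear -hh; elim: fs hh => [|g fs IH] //= [<-|hh].
    by left.
  by right; apply: IH.
have hE' : `|p - Q E| < eta by rewrite -/p in hE.
exact: (ratio_est p0 p1 K1 haK e0 hE' hab ep1 ep2).
Qed.

End Hull.

Section Ulim.
Variable R : realType.
Variable T : Type.
Variable U : set_system T.
Hypothesis UU : UltraFilter U.
Variable V : set T.
Hypothesis UV : U V.

Definition ulim (x : T -> R) : R := sup [set a | U [set J | a <= x J]].

Lemma U_ex (Y : set T) : U Y -> exists J, Y J.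
Proof. by move=> h; have [J hJ] := filter_ex h; exists J. Qed.

Lemma UI (Y Z : set T) : U Y -> U Z -> U (Y `&` Z).
Proof. exact: filterI. Qed.

Lemma US (Y Z : set T) : Y `<=` Z -> U Y -> U Z.
Proof. exact: filterS. Qed.

Lemma ulimP (x : T -> R) : (forall J, V J -> 0 <= x J <= 1) ->
  forall e, 0 < e -> U [set J | `|x J - ulim x| < e].
Proof.
move=> hx e e0.
set As := [set a | U [set J | a <= x J]].
have A0 : As 0.
  by apply: US UV => J /hx /andP [].
have ub1 : ubound As 1.
  move=> a hA; have [J [hJ VJ]] := U_ex (UI hA UV).
  have := hx J VJ => /andP [_ h]; move: hJ => /= hJ; lra.
have hs : has_sup As by split; [exists 0 | exists 1].
have e20 : 0 < e / 2 by rewrite divr_gt0.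
have [a ha hal] := sup_adherent e20 hs.
have nA : ~ As (ulim x + e / 2).
  move=> h; have := sup_upper_bound hs h; rewrite /ulim -/As; lra.
have hc : U [set J | x J < ulim x + e / 2].
  case: (@in_ultra_setVsetC _ U [set J | ulim x + e / 2 <= x J] UU) => // h.
  by apply: US h => J /= /negP; rewrite -ltNge.
apply: US (UI ha hc) => J /= [h1 h2]; rewrite ltr_norml; apply/andP; split.
  rewrite /ulim -/As in hal *; lra.
lra.
Qed.

End Ulim.

Lemma tri3 (R : realType) (a b c d x y z : R) :
  `|a - b| <= x -> `|b - c| < y -> `|c - d| <= z -> `|a - d| < x + y + z.
Proof.
rewrite !ler_norml !ltr_norml => /andP [h1 h2] /andP [h3 h4] /andP [h5 h6].
apply/andP; split; lra.
Qed.

Section Main.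
Variable R : realType.
Variables (N Omega : Type) (A : set (set Omega)) (M : N -> set (set Omega))
  (t : N -> Omega -> set Omega -> R).
Hypothesis hts : type_space A M t.
Hypothesis UC : universally_consistent A t.
Variables (I : set N) (S E : set Omega) (i0 : N).
Hypothesis I0 : I i0.
Hypothesis AE : A E.
Hypothesis ES : E `<=` S.
Hypothesis tSI : forall w i, S w -> I i -> t i w E = 1.
Hypothesis S0 : S !=set0.

Lemma hA' : is_field A. Proof. exact: hA hts. Qed.

Definition valid (J : set N) := finite_set J /\ J `<=` I /\ J i0.

Lemma PJ_ex J : exists P : set Omega -> R,
  valid J -> [/\ pba A P, P E = 1 & forall i, J i -> Pi A t i P].
Proof.
case: (pselect (valid J)) => vJ; last by exists (fun _ => 0).
have [fJ [JI Ji0]] := vJ.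
have ccJ : cc_component A t J S.
  split => //; exists E; split => // w i Sw Ji; exact: tSI Sw (JI i Ji).
have [P [hP hPi hinf]] := UC fJ ccJ.
have tS0 : forall w, S w -> t i0 w E = 1 := fun w Sw => tSI Sw I0.
have PEZ := Pi_EZ hts AE ES tS0 hP (hPi i0 Ji0).
have AZ : A (Zs t i0 E) := MA hts (Z_in hts AE ES tS0).
have SZ : S `<=` Zs t i0 E := fun w Sw => tS0 w Sw.
have p0 : 0 < P E.
  rewrite PEZ; apply: lt_le_trans hinf _; apply: ge_inf.
    by exists 0 => _ [E' [AE' _] <-]; exact: pba_ge0 hP AE'.
  by exists (Zs t i0 E).
exists (condm P E) => _; split.
- exact: (condm_pba (hA hts) hP AE p0).
- by rewrite /condm setIid divff // gt_eqF.
- move=> i Ji; apply: (Pi_cond hts AE ES (fun w Sw => tSI Sw (JI i Ji))) => //; exact: hPi.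
Qed.

Let chP := choice PJ_ex.
Let Pc := projT1 chP.
Let hPc : forall J, valid J -> [/\ pba A (Pc J), Pc J E = 1 & forall i, J i -> Pi A t i (Pc J)]
  := projT2 chP.

Definition Bset (J0 : set N) : set (set N) := [set J | valid J /\ J0 `<=` J].
Definition B0 := filter_from valid Bset.

Lemma valid1 : valid [set i0].
Proof. by split; [exact: finite_set1 | split => // x ->]. Qed.

Lemma validU J1 J2 : valid J1 -> valid J2 -> valid (J1 `|` J2).
Proof.
move=> [f1 [s1 h1]] [f2 [s2 h2]]; split; first by rewrite finite_setU.
by split; [move=> x [] ?; [exact: s1 | exact: s2] | left].
Qed.

Lemma B0_proper : ProperFilter B0.
Proof.
apply: filter_from_proper.
  apply: filter_from_filter; first by exists [set i0]; exact: valid1.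
  move=> J1 J2 v1 v2; exists (J1 `|` J2); first exact: validU.
  move=> J [vJ sJ]; split; split => // x hx; apply: sJ; [by left | by right].
by move=> J0 v0; exists J0; split.
Qed.

Let exU := ultraFilterLemma B0_proper.
Let U := proj1_sig (cid exU).
Let UU : UltraFilter U := proj1 (proj2_sig (cid exU)).
Let B0U : B0 `<=` U := proj2 (proj2_sig (cid exU)).

Let UBset J0 : valid J0 -> U (Bset J0).
Proof. by move=> v0; apply: B0U; exists J0. Qed.

Let UV : U valid.
Proof. by apply: (US UU _ (UBset valid1)) => J []. Qed.

Definition Plim : set Omega -> R := fun X => ulim U (fun J => Pc J X).

Lemma Pc_bnd X : A X -> forall J, valid J -> 0 <= Pc J X <= 1.
Proof.
move=> AX J vJ; have [hP _ _] := hPc vJ.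
by rewrite (pba_ge0 hP AX) (pba_le1 hA' hP AX).
Qed.

Lemma Plim_cl X : A X -> forall e, 0 < e -> U [set J | valid J /\ `|Pc J X - Plim X| < e].
Proof.
move=> AX e e0; have := UI UU UV (ulimP UU UV (Pc_bnd AX) e0).
by move=> hU; apply: (US UU _ hU) => J [].
Qed.

Lemma Plim_pba : pba A Plim.
Proof.
split.
- move=> X Y AX AY XY; have AXY := fieldU hA' AX AY.
  apply: (@eq_eps _ _ _ 3) => // d d0.
  have [J [[vJ h1] [[_ h2] [_ h3]]]] :=
    U_ex UU (UI UU (Plim_cl AXY d0) (UI UU (Plim_cl AX d0) (Plim_cl AY d0))).
  have [[ha _ _] _ _] := hPc vJ.
  rewrite ha // in h1.
  move: h1 h2 h3; rewrite !ltr_norml => /andP [? ?] /andP [? ?] /andP [? ?].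
  rewrite ler_norml; apply/andP; split; lra.
- move=> X AX; apply/ler_addgt0Pr => d d0;
  have [J [vJ h]] := U_ex UU (Plim_cl AX d0).
  have := Pc_bnd AX vJ => /andP [h1 _].
  move: h; rewrite ltr_norml => /andP [? ?]; lra.
- apply: (@eq_eps _ _ _ 1) => // d d0.
  have [J [vJ h]] := U_ex UU (Plim_cl (fieldT hA') d0).
  have [[_ _ h1] _ _] := hPc vJ.
  by rewrite h1 distrC mulr1 in h *; apply: ltW.
Qed.

Lemma Plim_E : Plim E = 1.
Proof.
apply: (@eq_eps _ _ _ 1) => // d d0.
have [J [vJ h]] := U_ex UU (Plim_cl AE d0).
have [_ h1 _] := hPc vJ.
by rewrite h1 distrC mulr1 in h *; apply: ltW.
Qed.

Lemma sint_lim s : simple_over A s -> forall d, 0 < d ->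
  U [set J | valid J /\ `|simple_integral Plim s - simple_integral (Pc J) s| < d].
Proof.
elim: s => [|[c B] s IH] hs d d0.
  by apply: (US UU _ UV) => J vJ; split => //; rewrite !sint_nil subrr normr0.
case/so_cons: hs => /= AB hs.
have c1 : 0 < `|c| + 1 by rewrite ltr_pwDr // normr_ge0.
have d2 : 0 < d / 2 by rewrite divr_gt0.
have d3 : 0 < d / 2 / (`|c| + 1) by rewrite divr_gt0.
apply: (US UU _ (UI UU (IH hs _ d2) (Plim_cl AB d3))) => J [[vJ h1] [_ h2]].
split => //; rewrite !sint_cons.
have h3 : `|c * Plim B - c * Pc J B| < d / 2.
  rewrite -mulrBr normrM distrC.
  have hc : `|c| <= `|c| + 1 by rewrite lerDl.
  have h := ler_wpM2r (normr_ge0 (Pc J B - Plim B)) hc.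
  apply: le_lt_trans h _.
  by rewrite mulrC -ltr_pdivlMr.
have := ler_normD (c * Plim B - c * Pc J B) (simple_integral Plim s - simple_integral (Pc J) s).
have -> : c * Plim B - c * Pc J B + (simple_integral Plim s - simple_integral (Pc J) s) =
  c * Plim B + simple_integral Plim s - (c * Pc J B + simple_integral (Pc J) s) by ring.
move=> h; apply: le_lt_trans h _; rewrite (splitr d); exact: ltrD.
Qed.

Lemma int_lim f : inB A f -> forall e, 0 < e ->
  U [set J | valid J /\ `|integral A Plim f - integral A (Pc J) f| < e].
Proof.
move=> hf e e0; have e3 : 0 < e / 3 by rewrite divr_gt0.
have [s [hs hd]] := hf _ e3.
apply: (US UU _ (sint_lim hs e3)) => J [vJ h]; split => //.
have [hP _ _] := hPc vJ.
have a1 := int_approx hA' Plim_pba hf hs hd.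
have a2 := int_approx hA' hP hf hs hd.
rewrite distrC in a2.
have := tri3 a1 h a2.
have -> : e / 3 + e / 3 + e / 3 = e by field.
done.
Qed.

Lemma ints_lim (fs : seq (Omega -> R)) e : (forall f, List.In f fs -> inB A f) -> 0 < e ->
  U [set J | valid J /\ forall f, List.In f fs -> `|integral A Plim f - integral A (Pc J) f| < e].
Proof.
move=> hfs e0; elim: fs hfs => [|g fs IH] hfs.
  by apply: (US UU _ UV) => J vJ; split.
have := UI UU (int_lim (hfs g (or_introl erefl)) e0) (IH (fun f hf => hfs f (or_intror hf))).
move=> hU; apply: (US UU _ hU) => J [[vJ h1] [_ h2]]; split => // f /= [<-|hf] //; exact: h2.
Qed.

Lemma Plim_Pi i : I i -> Pi A t i Plim.
Proof.
move=> Ii; split.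
  have [ha hp h1] := Plim_pba; split => //; exists 1 => B AB.
  rewrite ger0_norm; [exact: pba_le1 hA' Plim_pba AB | exact: hp].
move=> fs e hfs e0; have e2 : 0 < e / 2 by rewrite divr_gt0.
have vJ0 : valid ([set i0] `|` [set i]).
  split; first by rewrite finite_setU; split; exact: finite_set1.
  by split; [move=> x [] -> | left].
have [J [[vJ h1] [_ sJ]]] := U_ex UU (UI UU (ints_lim hfs e2) (UBset vJ0)).
have [_ _ hPi] := hPc vJ.
have [_ H] := hPi i (sJ i (or_intror erefl)).
have [Q hQ hQd] := H fs (e / 2) hfs e2.
exists Q => // f hf.
have := ler_distD (integral A (Pc J) f) (integral A Plim f) (integral A Q f).
move=> h; apply: le_lt_trans h _; rewrite (splitr e); apply: ltrD; [exact: h1 | exact: hQd].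
Qed.

Lemma main_cons : consistent_for A t I S.
Proof.
exists Plim; split.
- exact: Plim_pba.
- exact: Plim_Pi.
- apply: lt_le_trans ltr01 _; apply: lb_le_inf.
    exists (Plim setT); exists setT => //; split; [exact: fieldT hA' | exact: subsetT].
  move=> _ [E' [AE' SE'] <-]; rewrite -Plim_E.
  apply: (pba_mono hA' Plim_pba AE AE') => x /ES; exact: SE'.
Qed.

End Main.

Local Close Scope ring_scope.
Local Close Scope classical_set_scope.
Unset Implicit Arguments.

Theorem lemma6 (R : realType) (N Omega : Type) (A : set (set Omega))
  (M : N -> set (set Omega)) (t : N -> Omega -> set Omega -> R) :
  inhabited N ->
  type_space A M t ->
  universally_consistent A t <->
  (forall (I : set N) (S : set Omega),
     cc_component A t I S -> consistent_for A t I S).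
Proof.
move=> _ hts; split; last by move=> H I _ S cc; exact: H.
move=> UC I S cc; have [S0 [E [AE ES tSI]]] := cc.
case: (pselect (exists i0, I i0)) => [[i0 I0]|nI].
  exact: (main_cons hts UC I0 AE ES tSI S0).
have I0 : I = set0.
  by apply/seteqP; split => x // Ix; apply: nI; exists x.
apply: UC => //; rewrite I0; exact: finite_set0.
Qed.
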